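(* For all $k\in\mathbb N_+$ and $T\ge0$, writing $q_c=\lfloor k/c\rfloor$ for $c\in\mathbb N_+$, $$v(k,T)\le\min_{c\in\mathbb N_+}\Big\{\big(q_cF(c)+F(k-c\,q_c)\big)\mathbb P(N(T)\ge q_c)+\sum_{n=0}^{q_c-1}\big(nF(c)+F(k-nc)\big)\mathbb P(N(T)=n)\Big\}.$$
   Context: Let $\lambda>0$ and let $N$ be a Poisson process with intensity $\lambda$, arrival times $0<\sigma_1<\sigma_2<\cdots$, and natural filtration $\mathcal F_t=\sigma(N_s:s\le t)$. Let $F:[0,\infty)\to[0,\infty)$ be strictly increasing and strictly convex with $F(0)=0$. For $k\in\{0,1,\dots\}$ let $\mathcal A_k$ be the set of $(\mathcal F_t)$-adapted, integer-valued, nonnegative, non-increasing processes $\xi$ with $\xi_0=k$ whose values change only at arrival times of $N$, and $v(k,T)=\inf_{\xi\in\mathcal A_k}\mathbb E[\sum_{i:\sigma_i\le T}F(\xi_{\sigma_i-}-\xi_{\sigma_i})+F(\xi_T)]$. $\lfloor\cdot\rfloor$ is the floor function. *)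

(* Defs.v *)
From HB Require Import structures.
From mathcomp Require Import all_boot all_order all_algebra.
From mathcomp Require Import all_classical all_reals all_analysis.
Set Implicit Arguments. Unset Strict Implicit. Unset Printing Implicit Defensive.
Import Order.TTheory GRing.Theory Num.Theory.
Import numFieldNormedType.Exports.
Local Open Scope classical_set_scope.
Local Open Scope ring_scope.

Section Defs.
Context {R : realType} {d : measure_display} {Omega : measurableType d}.
Variable P : probability Omega R.

Definition counting_paths (N : R -> Omega -> nat) : Prop :=
  forall w,
  [/\ N 0 w = 0%N,
      (forall s t, 0 <= s -> s <= t -> (N s w <= N t w)%N),
      (forall t, 0 <= t -> exists2 e, 0 < e &
          forall s, t <= s -> s < t + e -> N s w = N t w) &
      (forall t, 0 < t -> exists2 e, 0 < e &
          forall s, 0 <= s -> t - e < s -> s < t -> (N t w <= (N s w).+1)%N)].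

Definition poisson_process (lam : R) (N : R -> Omega -> nat) : Prop :=
  [/\ counting_paths N,
      (forall t (A : set nat), measurable (N t @^-1` A)),
      (forall s t (n : nat), 0 <= s -> s <= t ->
         P [set w | (N t w - N s w)%N = n] =
         (expR (- (lam * (t - s))) * (lam * (t - s)) ^+ n / (n`!)%:R)%:E) &
      (forall (n : nat) (tt : nat -> R) (m : nat -> nat),
         0 <= tt 0%N -> (forall i, (i < n)%N -> tt i <= tt i.+1) ->
         P (\bigcap_(i in [set j | (j < n)%N])
               [set w | (N (tt i.+1) w - N (tt i) w)%N = m i]) =
         (\prod_(i < n) P [set w | (N (tt i.+1) w - N (tt i) w)%N = m i])%E)].

Definition natural_filtration (N : R -> Omega -> nat) (t : R) : set (set Omega) :=
  <<s \bigcup_(s in [set s | 0 <= s <= t]) [set N s @^-1` A | A in [set: set nat]] >>.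

Definition arrival_time (N : R -> Omega -> nat) (i : nat) (w : Omega) : R :=
  inf [set t : R | 0 <= t /\ (i <= N t w)%N].

(* A process is a map xi : R -> Omega -> nat (only
   times t >= 0 matter); "values change only at arrival times" is encoded as:
   xi_t = xi_s whenever N_t = N_s, i.e. xi is constant on each [sigma_i, sigma_{i+1}). *)
Definition admissible (N : R -> Omega -> nat) (k : nat) (xi : R -> Omega -> nat) : Prop :=
  [/\ (forall w, xi 0 w = k),
      (forall t (n : nat), 0 <= t -> natural_filtration N t [set w | xi t w = n]),
      (forall w s t, 0 <= s -> s <= t -> (xi t w <= xi s w)%N) &
      (forall w s t, 0 <= s -> 0 <= t -> N s w = N t w -> xi s w = xi t w)].

Definition exec_cost (F : R -> R) (N : R -> Omega -> nat) (T : R)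
    (xi : R -> Omega -> nat) (w : Omega) : \bar R :=
  ((\sum_(1 <= i <oo | (arrival_time N i w <= T)%R)
      (F (lim ((fun t => (xi t w)%:R : R) @ (arrival_time N i w)^'-)
          - (xi (arrival_time N i w) w)%:R))%:E)
   + (F (xi T w)%:R)%:E)%E.

Definition value_fun (F : R -> R) (N : R -> Omega -> nat) (k : nat) (T : R) : \bar R :=
  ereal_inf [set (\int[P]_w exec_cost F N T xi w)%E | xi in admissible N k].

End Defs.

Definition strictly_convex_on_nonneg {R : realType} (F : R -> R) : Prop :=
  forall x y a, 0 <= x -> 0 <= y -> x != y -> 0 < a -> a < 1 ->
    F (a * x + (1 - a) * y) < a * F x + (1 - a) * F y.

Definition strictly_increasing_on_nonneg {R : realType} (F : R -> R) : Prop :=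
  forall x y, 0 <= x -> x < y -> F x < F y.

(* Main.v *)
Require Import Defs.
From HB Require Import structures.
From mathcomp Require Import all_boot all_order all_algebra.
From mathcomp Require Import all_classical all_reals all_analysis.
From mathcomp Require Import measurable_realfun zify.
Import Order.TTheory GRing.Theory Num.Theory.
Import numFieldNormedType.Exports.
Local Open Scope classical_set_scope.
Local Open Scope ring_scope.

Section Helpers.
Context {R : realType} {d : measure_display} {Omega : measurableType d}.
Variable N : R -> Omega -> nat.
Hypothesis HN : counting_paths N.

Lemma reach_facts w i : (0 < i)%N -> (exists t, 0 <= t /\ (i <= N t w)%N) ->
  [/\ 0 < arrival_time N i w, N (arrival_time N i w) w = i,
   (forall t, 0 <= t -> t < arrival_time N i w -> (N t w < i)%N) &
   exists2 e, 0 < e & forall t, arrival_time N i w - e < t -> t < arrival_time N i w ->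
     0 < t /\ N t w = i.-1].
Proof.
move=> i0 [t0 [t00 ht0]].
have [N0 Nmono Nrc Njump] := HN w.
rewrite /arrival_time.
set S := [set t | 0 <= t /\ (i <= N t w)%N].
set s := inf S.
have Sne : S !=set0 by exists t0.
have hlb : has_lbound S by exists 0 => t [].
have hS : has_inf S by [].
have lb : forall t, S t -> s <= t by move=> t St; exact: (ge_inf hlb).
have s0 : 0 <= s by apply: lb_le_inf => // t [].
have Ns : (i <= N s w)%N.
  have [e e0 Hc] := Nrc s s0.
  have [t St hts] := inf_adherent e0 hS.
  have := lb t St => hst.
  by rewrite -(Hc t hst hts); case: St.
have below : forall t, 0 <= t -> t < s -> (N t w < i)%N.
  move=> t t0' hts; rewrite ltnNge; apply/negP => hit.
  by have := lb t (conj t0' hit); rewrite leNgt hts.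
have spos : 0 < s.
  rewrite lt_neqAle s0 andbT; apply/negP => /eqP s0'.
  by move: Ns; rewrite -s0' N0 => Ns; lia.
have [e' e'0 Hj] := Njump s spos.
pose e := Num.min e' s.
have e0 : 0 < e by rewrite lt_min e'0 spos.
have key : forall t, s - e < t -> t < s -> 0 < t /\ (N s w <= (N t w).+1)%N /\ (N t w < i)%N.
  move=> t h1 h2.
  have tpos : 0 < t.
    by apply: (le_lt_trans _ h1); rewrite subr_ge0 /e ge_min lexx orbT.
  have h1' : s - e' < t.
    by apply: (le_lt_trans _ h1); rewrite lerD2l lerN2 /e ge_min lexx.
  split=> //; split; first exact: Hj (ltW tpos) h1' h2.
  exact: below (ltW tpos) h2.
have Nsi : N s w = i.
  have [h1 h2] : s - e < s - e / 2 /\ s - e / 2 < s.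
    split; first by rewrite ltrD2l ltrN2 ltr_pdivrMr // ltr_pMr // ltr1n.
    by rewrite ltrBlDr ltrDl divr_gt0.
  have [_ [a b]] := key _ h1 h2.
  apply/eqP; rewrite eqn_leq Ns andbT; apply: (leq_trans a); exact: b.
split => //.
exists e => // t h1 h2; have [tp [a b]] := key t h1 h2.
split => //; rewrite Nsi in a; lia.
Qed.
End Helpers.

Lemma left_lim {R : realType} (a C e : R) (f : R -> R) : 0 < e ->
  (forall t, a - e < t -> t < a -> f t = C) -> lim (f @ a^'-) = C.
Proof.
move=> e0 H; apply: norm_lim_near_cst.
near=> t; apply: H.
- near: t; apply: nbhs_left_gt; by rewrite ltrBlDr ltrDl.
- near: t; exact: nbhs_left_lt.
Unshelve. all: by end_near.
Qed.

Lemma diff_jump {R : realType} k c q i : (0 < i)%N -> (c * q <= k)%N ->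
  ((k - c * minn i.-1 q)%N%:R - (k - c * minn i q)%N%:R : R)
   = if (i <= q)%N then c%:R else 0.
Proof.
move=> i0 hk; case: ifP => h.
  have -> : minn i.-1 q = i.-1 by apply/minn_idPl; lia.
  have -> : minn i q = i by apply/minn_idPl.
  have hci : (c * i = c * i.-1 + c)%N by rewrite -mulnSr prednK.
  have : (c * i <= c * q)%N by rewrite leq_mul2l h orbT.
  move=> hh.
  have -> : (k - c * i.-1 = k - c * i + c)%N by lia.
  by rewrite natrD addrAC subrr add0r.
have -> : minn i.-1 q = q by apply/minn_idPr; lia.
have -> : minn i q = q by apply/minn_idPr; lia.
by rewrite subrr.
Qed.

Lemma psum {R : realType} (a : R) M n :
  \sum_(1 <= i < n.+1) (if (i <= M)%N then a else 0) = (minn n M)%:R * a.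
Proof.
elim: n => [|n IH]; first by rewrite big_geq // min0n mul0r.
rewrite big_nat_recr //= IH.
case: ifP => h.
  have -> : minn n M = n by apply/minn_idPl; lia.
  have -> : minn n.+1 M = n.+1 by apply/minn_idPl.
  by rewrite mulrSr mulrDl mul1r.
have -> : minn n M = M by apply/minn_idPr; lia.
have -> : minn n.+1 M = M by apply/minn_idPr; lia.
by rewrite addr0.
Qed.

Section Strategy.
Context {R : realType} {d : measure_display} {Omega : measurableType d}.
Variable N : R -> Omega -> nat.
Hypothesis HN : counting_paths N.
Variables (F : R -> R) (k c q : nat).
Hypothesis F0 : F 0 = 0.
Hypothesis hk : (c * q <= k)%N.

Definition xi : R -> Omega -> nat :=
  fun t w => (k - c * minn (if (t < 0)%R then 0%N else N t w) q)%N.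

Lemma xi_pos t w : 0 <= t -> xi t w = (k - c * minn (N t w) q)%N.
Proof. by move=> t0; rewrite /xi ltNge t0. Qed.

Lemma term_eq w i T : 0 <= T -> (0 < i)%N ->
 (if arrival_time N i w <= T then
    (F (lim ((fun t => (xi t w)%:R : R) @ (arrival_time N i w)^'-)
       - (xi (arrival_time N i w) w)%:R))%:E else 0%E)
 = ((if (i <= minn (N T w) q)%N then F c%:R else 0))%:E.
Proof.
move=> T0 i0.
have [N0 Nmono Nrc Njump] := HN w.
have [[t [t0 ht]]|unr] := pselect (exists t, 0 <= t /\ (i <= N t w)%N).
  have [sp Nsi below [e e0 He]] := @reach_facts R d Omega N HN w i i0 (ex_intro _ t (conj t0 ht)).
  set s := arrival_time N i w in sp Nsi below He *.
  have -> : lim ((fun t => (xi t w)%:R : R) @ s^'-) = (k - c * minn i.-1 q)%N%:R.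
    apply: (@left_lim R s _ e (fun t => (xi t w)%:R) e0) => u h1 h2.
    have [up Nu] := He u h1 h2.
    by rewrite xi_pos ?(ltW up) // Nu.
  rewrite xi_pos ?(ltW sp) // Nsi diff_jump //.
  have -> : (s <= T) = (i <= N T w)%N.
    apply/idP/idP => h.
      by rewrite -Nsi; apply: Nmono => //; exact: ltW.
    apply: (ge_inf _ (conj T0 h)).
    by exists 0 => u [].
  case: (leqP i (N T w)) => h1; case: (leqP i q) => h2 /=.
  - by rewrite leq_min h1 h2.
  - by rewrite leq_min h1 leqNgt h2 /= F0.
  - by rewrite leq_min leqNgt h1.
  - by rewrite leq_min leqNgt h1.
have sE : arrival_time N i w = 0.
  rewrite /arrival_time.
  have -> : [set t : R | 0 <= t /\ (i <= N t w)%N] = set0.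
    by apply/seteqP; split => t // [t0 ht]; exfalso; apply: unr; exists t.
  exact: inf0.
have hT : (N T w < i)%N.
  by rewrite ltnNge; apply/negP => h; apply: unr; exists T.
rewrite sE T0 /=.
have -> : lim ((fun t => (xi t w)%:R : R) @ 0^'-) = k%:R.
  apply: (@left_lim R 0 _ 1 (fun t => (xi t w)%:R) ltr01) => u h1 h2.
  by rewrite /xi h2 min0n muln0 subn0.
rewrite xi_pos // N0 min0n muln0 subn0 subrr F0.
by rewrite leq_min leqNgt hT.
Qed.


Lemma cost_eq T w : 0 <= T ->
  exec_cost F N T xi w =
  ((minn (N T w) q)%:R * F c%:R + F (k - c * minn (N T w) q)%N%:R)%:E.
Proof.
move=> T0; rewrite /exec_cost xi_pos // EFinD; congr (_ + _)%E.
apply: lim_near_cst => //.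
exists q.+1 => // n /= hn.
rewrite big_mkcond /=.
under eq_big_nat => i /andP[hi _] do rewrite term_eq //.
rewrite sumEFin; congr EFin.
case: n hn => // n hn; rewrite psum; congr (_ * _); congr (_%:R).
apply/minn_idPr; rewrite geq_min; apply/orP; right; lia.
Qed.

End Strategy.

Lemma xi_admissible {R : realType} {d : measure_display} {Omega : measurableType d}
  (N : R -> Omega -> nat) k c q : counting_paths N -> admissible N k (xi N k c q).
Proof.
move=> HN; split.
- move=> w; have [N0 _ _ _] := HN w.
  by rewrite xi_pos // N0 min0n muln0 subn0.
- move=> t n t0; rewrite /natural_filtration; apply: sub_gen_smallest.
  exists t; first by rewrite /= t0 lexx.
  exists [set m | (k - c * minn m q)%N = n] => //.
  by apply/seteqP; split => w /=; rewrite xi_pos.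
- move=> w s t s0 st; have [_ Nmono _ _] := HN w.
  rewrite !xi_pos //; last exact: le_trans st.
  have h := Nmono s t s0 st.
  apply: leq_sub2l; apply: leq_mul => //; lia.
- by move=> w s t s0 t0 e; rewrite !xi_pos // e.
Qed.

Lemma int_indic {R : realType} {d : measure_display} {Omega : measurableType d}
  (P : probability Omega R) (A : set Omega) (a : R) : measurable A -> 0 <= a ->
  (\int[P]_w (a * \1_A w)%:E = (a * fine (P A))%:E)%E.
Proof.
move=> mA a0.
under eq_integral do rewrite EFinM.
rewrite ge0_integralZl_EFin //.
- by rewrite integral_indic // setIT EFinM fineK //; exact: fin_num_measure.
- by apply/measurable_EFinP; exact: measurable_indic.
Qed.

Lemma meas_scal {R : realType} {d : measure_display} {Omega : measurableType d}
  (A : set Omega) (a : R) : measurable A ->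
  measurable_fun setT (fun w => (a * \1_A w)%:E).
Proof.
move=> mA; apply/measurable_EFinP.
apply: (@measurable_funM _ _ _ _ (cst a) (\1_A)) => //.
Qed.

Theorem lemma2p2 (R : realType) (d : measure_display) (Omega : measurableType d)
  (P : probability Omega R) (lam : R) (N : R -> Omega -> nat) (F : R -> R)
  (k : nat) (T : R) :
  0 < lam -> poisson_process P lam N ->
  F 0 = 0 -> (forall x, 0 <= x -> 0 <= F x) ->
  strictly_increasing_on_nonneg F -> strictly_convex_on_nonneg F ->
  (0 < k)%N -> 0 <= T ->
  forall c : nat, (0 < c)%N ->
  let q := (k %/ c)%N in
  (value_fun P F N k T <=
   (((q%:R * F c%:R + F (k%:R - c%:R * q%:R)) * fine (P [set w | (q <= N T w)%N])
     + \sum_(0 <= n < q)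
         ((n%:R * F c%:R + F (k%:R - n%:R * c%:R)) * fine (P [set w | (N T w = n)%N]))))%:E)%E.
Proof.
move=> lam0 [HN Hmeas _ _] F0 Fpos _ _ k0 T0 c c0 /=.
set q := (k %/ c)%N.
have hk : (c * q <= k)%N by rewrite mulnC leq_trunc_div.
have hnk : forall n, (n <= q)%N -> (c * n <= k)%N.
  by move=> n hn; apply: leq_trans hk; rewrite leq_mul2l hn orbT.
set gq := q%:R * F c%:R + F (k%:R - c%:R * q%:R).
set gn := fun n : nat => n%:R * F c%:R + F (k%:R - n%:R * c%:R).
set B := [set w | (q <= N T w)%N].
set A := fun n : nat => [set w | (N T w = n)%N].
have mB : measurable B by exact: (Hmeas T [set m | (q <= m)%N]).
have mA : forall n, measurable (A n) by move=> n; exact: (Hmeas T [set n]).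
have Fc : 0 <= F c%:R by apply: Fpos.
have gq0 : 0 <= gq.
  apply: addr_ge0; first by apply: mulr_ge0.
  apply: Fpos; rewrite subr_ge0 -natrM ler_nat; exact: hk.
have gn0 : forall n, (n <= q)%N -> 0 <= gn n.
  move=> n hn; apply: addr_ge0; first by apply: mulr_ge0.
  apply: Fpos; rewrite subr_ge0 -natrM ler_nat mulnC; exact: hnk.
rewrite /value_fun.
apply: le_trans; first apply: ereal_inf_lbound.
  by exists (xi N k c q) => //; exact: xi_admissible.
rewrite (eq_integral (fun w => (gq * \1_B w)%:E +
   \sum_(0 <= n < q) (gn n * \1_(A n) w)%:E)%E); last first.
  move=> w _; rewrite cost_eq // sumEFin -EFinD; congr EFin.
  case: (ltnP (N T w) q) => h.
    rewrite indicE memNset /=; last by rewrite /B /=; rewrite leqNgt h.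
    rewrite mulr0 add0r.
    rewrite (bigD1_seq (N T w)) /=; last 2 first.
    + by rewrite mem_index_iota.
    + exact: iota_uniq.
    rewrite big1 ?addr0; last first.
      move=> n hn; rewrite indicE memNset ?mulr0 // /A /= => e.
      by rewrite e eqxx in hn.
    rewrite indicE mem_set // mulr1 /gn natrB ?hnk ?(ltnW h) // natrM.
    by rewrite [(c%:R * _)]mulrC.
    rewrite indicE mem_set // mulr1 big1_seq ?addr0; last first.
      move=> n /andP[_]; rewrite mem_index_iota => hn.
      rewrite indicE memNset ?mulr0 // /A /= => e; lia.
    by rewrite /gq natrB // natrM.
under eq_integral do rewrite big_mkord.
rewrite ge0_integralD //; last 4 first.
- by move=> w _; rewrite lee_fin mulr_ge0 // indicE ler0n.
- exact: meas_scal.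
- move=> w _; apply: sume_ge0 => i _.
  by rewrite lee_fin mulr_ge0 ?gn0 ?(ltnW (ltn_ord i)) // indicE ler0n.
- by apply: emeasurable_sum => i; exact: meas_scal.
rewrite ge0_integral_sum //; last 2 first.
- by move=> i; exact: meas_scal.
- move=> i w _.
  by rewrite lee_fin mulr_ge0 ?gn0 ?(ltnW (ltn_ord i)) // indicE ler0n.
have -> : (\sum_(i < q) \int[P]_x (gn i * \1_(A i) x)%:E =
    \sum_(i < q) (gn i * fine (P (A i)))%:E)%E.
  apply: eq_bigr => i _; apply: int_indic => //.
  exact: gn0 (ltnW (ltn_ord i)).
rewrite int_indic // -(big_mkord xpredT (fun n => (gn n * fine (P (A n)))%:E)) sumEFin -EFinD.
by rewrite /gn /A.
Qed.
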